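(* Let $x,y$ be nonzero complex numbers, $N\ge1$ and $0\le j,k\le N$; put $m=\min(j,k)$, $M=\max(j,k)$ and $c=\frac{1+xy}{2\sqrt{xy}}$. Then the skew Schur polynomial indexed by the shape $(N,j)/(k)$ and evaluated at the two variables $x,y^{-1}$ satisfies $$s_{(N,j)/(k)}(x,y^{-1})=(xy^{-1})^{(N+j-k)/2}\,U_{m}(c)\,U_{N-M}(c)=\frac{1}{x^{k}y^{N+j}}\sum_{r=0}^{m}(xy)^r\sum_{r=M}^{N}(xy)^r,$$ where $U_n$ are the Chebyshev polynomials of the second kind.
   Context: Chebyshev polynomials of the second kind: $U_0(z)=1$, $U_1(z)=2z$, $U_{n+1}(z)=2zU_n(z)-U_{n-1}(z)$. $s_{(N,j)/(k)}$ denotes the skew Schur polynomial of the skew shape obtained from the partition $(N,j)$ by removing the partition $(k)$ (it is $0$ unless $(k)\subseteq(N,j)$). The same branch of $\sqrt{xy}$ is used throughout. *)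

(* Defs.v *)
From HB Require Import structures.
From mathcomp Require Import all_boot all_order all_algebra.
Set Implicit Arguments. Unset Strict Implicit. Unset Printing Implicit Defensive.
Import Order.TTheory GRing.Theory Num.Theory.
Local Open Scope ring_scope.

(* Chebyshev polynomials of the second kind, evaluated at z:
   U_0 = 1, U_1 = 2z, U_{n+1} = 2 z U_n - U_{n-1}.
   chebU_pair n z = (U_n(z), U_{n+1}(z)). *)
Fixpoint chebU_pair (R : nzRingType) (n : nat) (z : R) : R * R :=
  match n with
  | 0 => (1, 2 * z)
  | n'.+1 => let p := chebU_pair n' z in (p.2, 2 * z * p.2 - p.1)
  end.
Definition chebU (R : nzRingType) (n : nat) (z : R) : R := (chebU_pair n z).1.

(* Partitions are sequences of nats (weakly decreasing); nth 0 gives parts. *)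
Definition width (la : seq nat) : nat := foldr maxn 0%N la.

(* cell (row i, column c), 0-based, belongs to the skew diagram la/mu *)
Definition skew_cell (la mu : seq nat) (i c : nat) : bool :=
  (nth 0%N mu i <= c)%N && (c < nth 0%N la i)%N.

Definition entry n (o : option 'I_n) : nat := if o is Some i then val i else 0%N.

Definition cells (la : seq nat) := ('I_(size la) * 'I_(width la))%type.

(* semistandard fillings of la/mu with entries in {0,..,n-1}:
   cells of the diagram get Some entry, other positions None;
   rows weakly increase, columns strictly increase. *)
Definition ssyt_filling (la mu : seq nat) (n : nat)
    (T : {ffun cells la -> option 'I_n}) : bool :=
  [forall p : cells la, skew_cell la mu p.1 p.2 == (T p != None)] &&
  [forall p : cells la, forall q : cells la,
     (skew_cell la mu p.1 p.2 && skew_cell la mu q.1 q.2) ==>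
     ((((val p.1 == val q.1) && (val q.2 == (val p.2).+1)) ==>
          (entry (T p) <= entry (T q))%N) &&
      (((val q.1 == (val p.1).+1) && (val q.2 == val p.2)) ==>
          (entry (T p) < entry (T q))%N))].

Definition tab_weight (R : comNzRingType) (la mu : seq nat) (n : nat) (z : 'I_n -> R)
    (T : {ffun cells la -> option 'I_n}) : R :=
  \prod_(p : cells la | skew_cell la mu p.1 p.2)
     (if T p is Some i then z i else 1).

Definition skew_schur (R : comNzRingType) (la mu : seq nat) (n : nat) (z : 'I_n -> R) : R :=
  if [forall i : 'I_(size mu), (nth 0%N mu i <= nth 0%N la i)%N]
  then \sum_(T : {ffun cells la -> option 'I_n} | @ssyt_filling la mu n T)
         @tab_weight R la mu n z T
  else 0.

Definition two_vars (R : nzRingType) (a b : R) : 'I_2 -> R :=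
  fun i => if val i == 0%N then a else b.

(* Main.v *)
Require Import Defs.
From HB Require Import structures.
From mathcomp Require Import all_boot all_order all_algebra.
From mathcomp Require Import ring lra zify.
Import Order.TTheory GRing.Theory Num.Theory.
Local Open Scope ring_scope.

Lemma find_exact (T : Type) (x0 : T) (a : pred T) (s : seq T) (t : nat) :
  (t <= size s)%N -> (forall i, (i < t)%N -> ~~ a (nth x0 s i)) ->
  ((t < size s)%N -> a (nth x0 s t)) -> find a s = t.
Proof.
elim: s t => [|x s IH] [|t] //= ht hb ha.
- by rewrite ha.
- have := hb 0%N isT => /= /negbTE ->; congr S; apply: IH => //.
  by move=> i hi; apply: (hb i.+1).
Qed.

Section Comb.
Variables (N j k : nat).
Hypotheses (hN : (0 < N)%N) (hj : (j <= N)%N) (hk : (k <= N)%N).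
Local Notation la := [:: N; j].
Local Notation mu := [:: k].
Local Notation cl := (cells la).
Local Notation FT := {ffun cl -> option 'I_2}.
Local Notation P := (@ssyt_filling la mu 2).
Local Notation sc := (skew_cell la mu).

Lemma hW : width la = N.
Proof. by rewrite /width /= maxn0; apply/maxn_idPl. Qed.

Definition tv (T : FT) (i c : nat) : nat :=
  match (insub i : option 'I_(size la)), (insub c : option 'I_(width la)) with
  | Some i', Some c' => entry (T (i', c'))
  | _, _ => 0%N end.

Lemma tvE T (p : cl) : tv T p.1 p.2 = entry (T p).
Proof. by rewrite /tv !valK; case: p. Qed.

Lemma tv_le1 T i c : (tv T i c <= 1)%N.
Proof.
rewrite /tv; case: insub => // i'; case: insub => // c'.
by case: (T _) => //= e; have := ltn_ord e.
Qed.

Lemma sc0 c : sc 0 c = (k <= c < N)%N. Proof. by []. Qed.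
Lemma sc1 c : sc 1 c = (c < j)%N. Proof. by []. Qed.

Lemma mk_cell (i c : nat) : (i < 2)%N -> (c < N)%N ->
  {p : cl | val p.1 = i /\ val p.2 = c}.
Proof.
move=> hi hc.
have hc' : (c < width la)%N by rewrite hW.
by exists (Ordinal (hi : (i < size la)%N), Ordinal hc').
Qed.

Lemma tv_cell T i c : (i < 2)%N -> (c < N)%N ->
  exists p : cl, [/\ val p.1 = i, val p.2 = c & tv T i c = entry (T p)].
Proof.
move=> hi hc; case: (mk_cell _ _ hi hc) => p [h1 h2]; exists p; split => //.
by rewrite -h1 -h2 tvE.
Qed.

Lemma P_none T (p : cl) : P T -> ~~ sc p.1 p.2 -> T p = None.
Proof.
case/andP => /forallP /(_ p) /eqP H _ hs; move: H; rewrite (negbTE hs).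
by case: (T p).
Qed.

Lemma P_some T (p : cl) : P T -> sc p.1 p.2 -> exists e, T p = Some e.
Proof.
case/andP => /forallP /(_ p) /eqP H _ hs; move: H; rewrite hs.
by case: (T p) => // e; exists e.
Qed.

Lemma P_row T i c : P T -> (i < 2)%N -> (c.+1 < N)%N -> sc i c -> sc i c.+1 ->
  (tv T i c <= tv T i c.+1)%N.
Proof.
case/andP => _ /forallP H hi hc s1 s2.
have [p [hp1 hp2 ->]] := tv_cell T _ _ hi (ltnW hc).
have [q [hq1 hq2 ->]] := tv_cell T _ _ hi hc.
have e1 : nat_of_ord p.1 = i := hp1; have e2 : nat_of_ord p.2 = c := hp2.
have f1 : nat_of_ord q.1 = i := hq1; have f2 : nat_of_ord q.2 = c.+1 := hq2.
move: (H p) => /forallP /(_ q) /implyP; rewrite hp1 hp2 hq1 hq2 e1 e2 f1 f2 s1 s2 => /(_ isT).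
by case/andP => /implyP -> //; rewrite !eqxx.
Qed.

Lemma P_col T c : P T -> (c < N)%N -> sc 0 c -> sc 1 c -> (tv T 0 c < tv T 1 c)%N.
Proof.
case/andP => _ /forallP H hc s1 s2.
have [p [hp1 hp2 ->]] := tv_cell T _ _ (isT : (0 < 2)%N) hc.
have [q [hq1 hq2 ->]] := tv_cell T _ _ (isT : (1 < 2)%N) hc.
have e1 : nat_of_ord p.1 = 0%N := hp1; have e2 : nat_of_ord p.2 = c := hp2.
have f1 : nat_of_ord q.1 = 1%N := hq1; have f2 : nat_of_ord q.2 = c := hq2.
move: (H p) => /forallP /(_ q) /implyP; rewrite hp1 hp2 hq1 hq2 e1 e2 f1 f2 s1 s2 => /(_ isT).
by case/andP => _ /implyP -> //; rewrite !eqxx.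
Qed.

Lemma P_mono T i c d : P T -> (i < 2)%N -> (c + d < N)%N -> sc i c -> sc i (c + d) ->
  (tv T i c <= tv T i (c + d))%N.
Proof.
move=> hP hi; elim: d => [|d IH] hcd s1 s2; first by rewrite addn0.
have s3 : sc i (c + d).
  by move: s1 s2; rewrite /skew_cell => /andP [a1 a2] /andP [b1 b2]; apply/andP; split; lia.
apply: leq_trans (IH _ s1 s3) _; first lia.
rewrite addnS; apply: P_row => //; [lia | by rewrite -addnS].
Qed.

Definition tT (T : FT) := find (fun c => (k <= c)%N && (tv T 0 c == 1%N)) (iota 0 N).
Definition uT (T : FT) := find (fun c => tv T 1 c == 1%N) (iota 0 j).

Lemma R0 T c : P T -> (k <= c < N)%N -> tv T 0 c = (tT T <= c)%N.
Proof.
move=> hP /andP [h1 h2].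
case: (ltnP c (tT T)) => hc.
- have := before_find 0%N hc; rewrite nth_iota // add0n h1 /=.
  have := tv_le1 T 0 c.
  by case: (tv T 0 c) => [|[|n]].
- have hs : has (fun c => (k <= c)%N && (tv T 0 c == 1%N)) (iota 0 N).
    by rewrite has_find size_iota; apply: leq_ltn_trans hc h2.
  have := nth_find 0%N hs; fold (tT T); rewrite nth_iota; last by rewrite -(size_iota 0 N) -has_find.
  rewrite add0n => /andP [ht /eqP ht1].
  have := @P_mono T 0 (tT T) (c - tT T) hP isT.
  rewrite subnKC // ht1 => /(_ h2); rewrite sc0 ht sc0 h1 h2 /= (leq_ltn_trans hc h2).
  move=> /(_ isT isT); have := tv_le1 T 0 c; lia.
Qed.

Lemma R1 T c : P T -> (c < j)%N -> tv T 1 c = (uT T <= c)%N.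
Proof.
move=> hP h1.
have h2 : (c < N)%N by apply: leq_trans hj.
case: (ltnP c (uT T)) => hc.
- have := before_find 0%N hc; rewrite nth_iota // add0n /=.
  have := tv_le1 T 1 c.
  by case: (tv T 1 c) => [|[|n]].
- have hs : has (fun c => tv T 1 c == 1%N) (iota 0 j).
    by rewrite has_find size_iota; apply: leq_ltn_trans hc h1.
  have hu : (uT T < j)%N by rewrite -[j](size_iota 0) -has_find.
  have := nth_find 0%N hs; fold (uT T); rewrite nth_iota; last by rewrite hu.
  rewrite add0n => /eqP ht1.
  have := @P_mono T 1 (uT T) (c - uT T) hP isT.
  rewrite subnKC // ht1 => /(_ h2); rewrite sc1 sc1 hu h1.
  move=> /(_ isT isT); have := tv_le1 T 1 c; lia.
Qed.


Lemma L2 T : P T -> [/\ (maxn j k <= tT T)%N, (tT T <= N)%N & (uT T <= minn j k)%N].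
Proof.
move=> hP.
have tN : (tT T <= N)%N by rewrite -[X in (_ <= X)%N](size_iota 0 N) find_size.
have uj : (uT T <= j)%N by rewrite -[X in (_ <= X)%N](size_iota 0 j) find_size.
have kt : (k <= tT T)%N.
  case: (ltnP (tT T) N) => ht; last by apply: leq_trans hk ht.
  have hs : has (fun c => (k <= c)%N && (tv T 0 c == 1%N)) (iota 0 N).
    by rewrite has_find size_iota.
  have := nth_find 0%N hs; fold (tT T); rewrite nth_iota // add0n.
  by case/andP.
case: (leqP j k) => hjk.
  by split => //; rewrite ?geq_max ?leq_min ?kt ?uj ?(leq_trans hjk kt) ?(leq_trans uj hjk).
have jt : (j <= tT T)%N.
  rewrite leqNgt; apply/negP => htj.
  have hcN : (maxn k (tT T) < N)%N by rewrite gtn_max (leq_trans hjk hj) (leq_trans htj hj).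
  have hcj : (maxn k (tT T) < j)%N by rewrite gtn_max hjk htj.
  have := P_col _ _ hP hcN.
  rewrite sc0 sc1 hcN hcj leq_maxl => /(_ isT isT).
  rewrite (R0 _ _ hP); last by rewrite leq_maxl hcN.
  rewrite leq_maxr /=; have := tv_le1 T 1 (maxn k (tT T)); lia.
have uk : (uT T <= k)%N.
  rewrite leqNgt; apply/negP => hku.
  have hkN : (k < N)%N by apply: leq_trans hjk hj.
  have := P_col _ _ hP hkN.
  rewrite sc0 sc1 hkN hjk leqnn => /(_ isT isT).
  rewrite (R1 _ _ hP hjk) (leqNgt (uT T) k) hku /=; lia.
by split => //; rewrite ?geq_max ?leq_min ?jt ?kt ?uj ?uk.
Qed.

Lemma bmono t c : ((t <= c)%N <= (t <= c.+1)%N)%N.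
Proof. by case: (leqP t c) => h //; rewrite (leq_trans h (leqnSn c)). Qed.

Definition gv (t u i c : nat) : nat := if i == 0%N then (t <= c)%N else (u <= c)%N.

Definition g (t u : nat) : FT :=
  [ffun p : cl => if sc p.1 p.2 then Some (inord (gv t u p.1 p.2) : 'I_2) else None].

Lemma entry_g t u (p : cl) : entry (g t u p) = if sc p.1 p.2 then gv t u p.1 p.2 else 0%N.
Proof.
rewrite ffunE; case: ifP => //= _; rewrite inordK //.
by rewrite /gv; case: ifP => _; rewrite ltnS leq_b1.
Qed.

Lemma L1 T : P T -> g (tT T) (uT T) = T.
Proof.
move=> hP; apply/ffunP => p; rewrite ffunE; case: ifP => hs; last first.
  by rewrite (P_none _ _ hP) // hs.
have [e he] := P_some _ _ hP hs; rewrite he; congr Some; apply: val_inj => /=.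
have -> : val e = entry (T p) by rewrite he.
rewrite inordK; last by rewrite /gv; case: ifP => _; rewrite ltnS leq_b1.
rewrite -tvE /gv; case: p hs {he} => [[[|[|i]] hi] c] //= hs.
- by rewrite (R0 _ _ hP).
- by rewrite (R1 _ _ hP).
Qed.

Lemma L3 t u : (maxn j k <= t <= N)%N -> (u <= minn j k)%N -> P (g t u).
Proof.
move=> /andP [h1 h2] h3; apply/andP; split.
  by apply/forallP => p; rewrite ffunE; case: ifP.
apply/forallP => p; apply/forallP => q; apply/implyP => /andP [sp sq].
rewrite !entry_g sp sq; apply/andP; split; apply/implyP => /andP [/eqP e1 /eqP e2].
  by rewrite /gv -e1 e2; case: ifP => _; apply: bmono.
case: p q sp sq e1 e2 => [[[|[|i]] hi] [c hc]] [[[|[|i']] hi'] [c' hc']] //= sp sq _ e2.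
subst c'; rewrite /gv /=; move: sp => /andP [sp1 sp2].
have -> : (t <= c)%N = false.
  by apply/negbTE; rewrite -ltnNge; apply: leq_trans sq (leq_trans (leq_maxl j k) h1).
by rewrite (leq_trans h3 (leq_trans (geq_minr j k) sp1)).
Qed.

Lemma tv_g t u i c : (i < 2)%N -> (c < N)%N ->
  tv (g t u) i c = if sc i c then gv t u i c else 0%N.
Proof.
move=> hi hc; have [p [h1 h2 ->]] := tv_cell (g t u) _ _ hi hc.
by rewrite entry_g -h1 -h2.
Qed.

Lemma L4 t u : (maxn j k <= t <= N)%N -> (u <= minn j k)%N ->
  tT (g t u) = t /\ uT (g t u) = u.
Proof.
move=> /andP [h1 h2] h3.
have kt : (k <= t)%N by apply: leq_trans (leq_maxr j k) h1.
have uj : (u <= j)%N by apply: leq_trans h3 (geq_minl j k).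
split; apply: (@find_exact _ 0%N); rewrite ?size_iota //.
- move=> i hi; rewrite nth_iota ?add0n; last by apply: leq_trans hi h2.
  rewrite tv_g //; last by apply: leq_trans hi h2.
  rewrite sc0 /gv /= (leqNgt t i) hi; by case: ifP; case: (k <= i)%N.
- move=> ht; rewrite nth_iota // add0n tv_g // sc0 kt ht /gv /= leqnn /= eqxx.
  done.
- move=> i hi; rewrite nth_iota ?add0n; last by apply: leq_trans hi uj.
  have hij : (i < j)%N by apply: leq_trans hi uj.
  rewrite tv_g //; last by apply: leq_trans hij hj.
  by rewrite sc1 hij /gv /= leqNgt hi.
- move=> hu; rewrite nth_iota // add0n tv_g //; last by apply: leq_trans hu hj.
  by rewrite sc1 hu /gv /= leqnn.
Qed.

Lemma sum_reindex (R : nmodType) (F : FT -> R) :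
  \sum_(T | P T) F T =
  \sum_(ab : 'I_N.+1 * 'I_N.+1 | (maxn j k <= ab.1)%N && (ab.2 <= minn j k)%N)
     F (g ab.1 ab.2).
Proof.
rewrite (reindex_onto (fun ab : 'I_N.+1 * 'I_N.+1 => g ab.1 ab.2)
           (fun T => (inord (tT T), inord (uT T)))) /=.
  apply: eq_bigl => -[a b] /=; apply/idP/idP.
    case/andP => hP /eqP [ea eb].
    have [p1 p2 p3] := L2 _ hP.
    have hb : (uT (g a b) <= N)%N by apply: leq_trans p3 (leq_trans (geq_minl j k) hj).
    have ta : tT (g a b) = a :> nat by move: (congr1 (@nat_of_ord _) ea); rewrite inordK ?ltnS.
    have ub : uT (g a b) = b :> nat by move: (congr1 (@nat_of_ord _) eb); rewrite inordK ?ltnS.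
    by apply/andP; split; [rewrite -[X in (_ <= X)%N]ta | rewrite -[X in (X <= _)%N]ub].
  case/andP => h1 h3.
  have h2 : (a <= N)%N by rewrite -ltnS.
  have hh : (maxn j k <= a <= N)%N by rewrite h1 h2.
  have [ea eb] := L4 _ _ hh h3.
  by rewrite L3 //= ea eb !inord_val eqxx.
move=> T hP; have [p1 p2 p3] := L2 _ hP.
rewrite !inordK ?ltnS //; last by apply: leq_trans p3 (leq_trans (geq_minl j k) hj).
exact: L1.
Qed.

Lemma prod_const_range (R : comNzRingType) (F : nat -> R) m n a :
  (forall c, (m <= c < n)%N -> F c = a) -> \prod_(m <= c < n) F c = a ^+ (n - m).
Proof. by move=> h; rewrite (eq_big_nat _ _ h) prodr_const_nat. Qed.

Lemma weight_g (R : comNzRingType) (x yi : R) t u :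
  (maxn j k <= t <= N)%N -> (u <= minn j k)%N ->
  @tab_weight R la mu 2 (two_vars x yi) (g t u)
  = x ^+ (t - k) * yi ^+ (N - t) * (x ^+ u * yi ^+ (j - u)).
Proof.
move=> /andP [h1 h2] h3.
have kt : (k <= t)%N by apply: leq_trans (leq_maxr j k) h1.
have jt : (j <= t)%N by apply: leq_trans (leq_maxl j k) h1.
have uj : (u <= j)%N by apply: leq_trans h3 (geq_minl j k).
pose H (i c : nat) : R := if sc i c then (if gv t u i c == 0%N then x else yi) else 1.
rewrite /tab_weight big_mkcond /=.
rewrite (eq_bigr (fun p : cl => H p.1 p.2)); last first.
  move=> p _; rewrite ffunE /H; case: (sc p.1 p.2) => //=.
  have e : \val (inord (gv t u p.1 p.2) : 'I_2) = gv t u p.1 p.2.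
    by apply: inordK; rewrite /gv; case: ifP => _; rewrite ltnS leq_b1.
  by rewrite /two_vars e.
rewrite -(pair_bigA _ (fun (i : 'I_(size la)) (c : 'I_(width la)) => H i c)) /=.
rewrite big_ord_recl big_ord_recl big_ord0 mulr1 /=.
have hW' : maxn N (maxn j 0) = N := hW.
rewrite -!(big_mkord xpredT) hW'; change (bump 0 0) with 1%N.
congr (_ * _).
  rewrite (big_cat_nat (leq0n k) hk) (big_cat_nat kt h2) /=.
  rewrite (@prod_const_range _ _ 0 k 1); last first.
    by move=> c /andP [_ hc]; rewrite /H sc0 leqNgt hc.
  rewrite (@prod_const_range _ _ k t x); last first.
    by move=> c /andP [hc1 hc2]; rewrite /H sc0 hc1 (leq_trans hc2 h2) /gv /= leqNgt hc2.
  rewrite (@prod_const_range _ _ t N yi); last first.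
    by move=> c /andP [hc1 hc2]; rewrite /H sc0 hc2 (leq_trans kt hc1) /gv /= hc1.
  by rewrite expr1n mul1r.
rewrite (big_cat_nat (leq0n u) (leq_trans uj hj)) (big_cat_nat uj hj) /=.
rewrite (@prod_const_range _ _ 0 u x); last first.
  by move=> c /andP [_ hc]; rewrite /H sc1 (leq_trans hc uj) /gv /= leqNgt hc.
rewrite (@prod_const_range _ _ u j yi); last first.
  by move=> c /andP [hc1 hc2]; rewrite /H sc1 hc2 /gv /= hc1.
rewrite (@prod_const_range _ _ j N 1); last first.
  by move=> c /andP [hc1 hc2]; rewrite /H sc1 ltnNge hc1.
by rewrite expr1n mulr1 subn0.
Qed.

End Comb.

Lemma chebU_sum (C : numFieldType) (s : C) (n : nat) : s != 0 ->
  s ^+ n * chebU n ((1 + s ^+ 2) / (2 * s)) = \sum_(0 <= r < n.+1) (s ^+ 2) ^+ r.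
Proof.
move=> s0; set c := (1 + s ^+ 2) / (2 * s).
have h2 : (2 : C) != 0 by rewrite pnatr_eq0.
suff: s ^+ n * (chebU_pair n c).1 = \sum_(0 <= r < n.+1) (s ^+ 2) ^+ r /\
      s ^+ n.+1 * (chebU_pair n c).2 = \sum_(0 <= r < n.+2) (s ^+ 2) ^+ r.
  by case.
elim: n => [|n [IH1 IH2]] /=.
  rewrite !big_nat_recr //= !big_nil /c; split; first by rewrite expr0 mul1r add0r.
  by rewrite add0r expr0 expr1; field.
split; first by [].
have hq : (s ^+ 2) ^+ n.+1 = s ^+ n.+1 * (chebU_pair n c).2 - s ^+ n * (chebU_pair n c).1.
  by rewrite IH1 IH2 big_nat_recr //= addrC addrK.
rewrite big_nat_recr //= -IH2 [(s ^+ 2) ^+ n.+2]exprS hq /c !exprS.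
by field.
Qed.


Lemma term_id (C : fieldType) (x y : C) (N j k a b : nat) : x != 0 -> y != 0 ->
  (k <= a)%N -> (a <= N)%N -> (b <= j)%N ->
  x ^+ (a - k) * y^-1 ^+ (N - a) * (x ^+ b * y^-1 ^+ (j - b))
  = (x ^+ k * y ^+ (N + j))^-1 * ((x * y) ^+ a * (x * y) ^+ b).
Proof.
move=> x0 y0 h1 h2 h3.
have y1 : y^-1 != 0 by rewrite invr_eq0.
rewrite !expfB_cond ?(negbTE x0) ?(negbTE y1) // exprD !exprMn !exprVn.
by field; rewrite !expf_neq0 ?oner_neq0.
Qed.

Theorem mainTheorem4 (C : numClosedFieldType) (x y : C) (N j k : nat) :
  x != 0 -> y != 0 -> (1 <= N)%N -> (j <= N)%N -> (k <= N)%N ->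
  forall s : C, s ^+ 2 = x * y ->
  let m := minn j k in
  let M := maxn j k in
  let c := (1 + x * y) / (2 * s) in
  skew_schur [:: N; j] [:: k] (two_vars x y^-1)
    = (s / y) ^+ (N + j - k) * chebU m c * chebU (N - M) c
  /\
  skew_schur [:: N; j] [:: k] (two_vars x y^-1)
    = (x ^+ k * y ^+ (N + j))^-1 *
      ((\sum_(0 <= r < m.+1) (x * y) ^+ r) * (\sum_(M <= r < N.+1) (x * y) ^+ r)).
Proof.
move=> x0 y0 hN hj hk s hs m M c.
have E2 : skew_schur [:: N; j] [:: k] (two_vars x y^-1) =
    (x ^+ k * y ^+ (N + j))^-1 *
      ((\sum_(0 <= r < m.+1) (x * y) ^+ r) * (\sum_(M <= r < N.+1) (x * y) ^+ r)).
  rewrite /skew_schur (_ : [forall i, _] = true); last first.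
    by apply/forallP => -[[|i] hi] //=.
  rewrite (@sum_reindex N j k hN hj hk).
  rewrite -(pair_big_dep (fun a : 'I_N.+1 => (maxn j k <= a)%N)
     (fun _ (b : 'I_N.+1) => (b <= minn j k)%N)
     (fun (a b : 'I_N.+1) => @tab_weight C [:: N; j] [:: k] 2 (two_vars x y^-1) (g N j k a b))) /=.
  have hmN : (m.+1 <= N.+1)%N by rewrite ltnS; apply: leq_trans (geq_minl j k) hj.
  have S1e : \sum_(0 <= r < m.+1) (x*y)^+r = \sum_(r < N.+1 | (r < m.+1)%N) (x*y)^+r.
    by rewrite big_mkord (big_ord_widen _ _ hmN).
  have S2e : \sum_(M <= r < N.+1) (x*y)^+r = \sum_(r < N.+1 | (M <= r)%N) (x*y)^+r.
    by rewrite big_geq_mkord.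
  rewrite S1e S2e [X in _ * X]mulrC big_distrl mulr_sumr /=.
  apply: eq_bigr => a ha; rewrite big_distrr mulr_sumr.
  apply: eq_big => b; first by rewrite ltnS.
  move=> hb.
  have hb' : (b <= minn j k)%N by rewrite -ltnS.
  have ha' : (maxn j k <= a <= N)%N by rewrite ha -ltnS ltn_ord.
  rewrite (@weight_g N j k hj hk C x y^-1 a b ha' hb').
  apply: term_id => //.
  - by apply: leq_trans (leq_maxr j k) ha.
  - by rewrite -ltnS ltn_ord.
  - by apply: leq_trans hb' (geq_minl j k).
split => //; rewrite E2.
have s0 : s != 0.
  apply/eqP => h; move: hs; rewrite h expr0n /= => /esym/eqP.
  by rewrite mulf_eq0 (negbTE x0) (negbTE y0).
have hMN : (M <= N)%N by rewrite geq_max hj hk.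
have S2e : \sum_(M <= r < N.+1) (x*y)^+r = (x*y)^+M * \sum_(0 <= r < (N-M).+1) (x*y)^+r.
  rewrite -{1}(add0n M) big_addn subSn // mulr_sumr; apply: eq_bigr => r _.
  by rewrite exprD mulrC.
have hc : c = (1 + s^+2) / (2 * s) by rewrite /c hs.
rewrite S2e hc -hs -(chebU_sum C s m s0) -(chebU_sum C s (N - M) s0).
move: (chebU m _) (chebU (N - M) _) => U V.
have hx : x = s^+2 / y by rewrite hs mulfK.
rewrite hx /m /M; clear E2 S2e hc m M hMN.
case: (leqP j k) => h.
  have [d hd] : exists d, k = (j + d)%N by exists (k - j)%N; lia.
  subst k.
  have [e he] : exists e, N = (j + d + e)%N by exists (N - (j + d))%N; lia.
  subst N.
  have -> : (j + d + e + j - (j + d))%N = (e + j)%N by lia.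
  have -> : (j + d + e - (j + d))%N = e by lia.
  rewrite !exprD !expr_div_n !exprMn.
  by field; rewrite ?expf_neq0 ?s0 ?y0 ?oner_neq0.
have [d hd] : exists d, j = (k + d)%N by exists (j - k)%N; lia.
subst j.
have [e he] : exists e, N = (k + d + e)%N by exists (N - (k + d))%N; lia.
subst N.
have -> : (k + d + e + (k + d) - k)%N = (e + k + d + d)%N by lia.
have -> : (k + d + e - (k + d))%N = e by lia.
rewrite !exprD !expr_div_n !exprMn.
by field; rewrite ?expf_neq0 ?s0 ?y0 ?oner_neq0.
Qed.
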